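(* Let $H$ be a weak Hopf algebra and $\pi\colon H\to A$ a partial representation of $H$ in an algebra $A$. The following are equivalent: (1) $\pi(h_1)\pi(S(h_2))=\pi(h_1S(h_2))=\pi(\varepsilon_t(h))$ for all $h\in H$; (2) $\pi(S(h_1))\pi(h_2)=\pi(S(h_1)h_2)=\pi(\varepsilon_s(h))$ for all $h\in H$; (3) $\pi$ is a representation, i.e. an algebra morphism.
   Context: All algebras are associative and unital over a field $\Bbbk$; Sweedler notation $\Delta(h)=h_1\otimes h_2$, $\Delta(1_H)=1_1\otimes1_2$. A weak Hopf algebra is $(H,m,u,\Delta,\varepsilon,S)$ with $H$ an algebra, $(H,\Delta,\varepsilon)$ a coalgebra, and for all $g,h,k$: $\Delta(kh)=\Delta(k)\Delta(h)$; $\varepsilon(kh_1)\varepsilon(h_2g)=\varepsilon(khg)=\varepsilon(kh_2)\varepsilon(h_1g)$; $(1\otimes\Delta(1))(\Delta(1)\otimes1)=\Delta^2(1)=(\Delta(1)\otimes1)(1\otimes\Delta(1))$; $h_1S(h_2)=\varepsilon_t(h)$; $S(h_1)h_2=\varepsilon_s(h)$; $S(h)=S(h_1)h_2S(h_3)$, where $\varepsilon_t(h)=\varepsilon(1_1h)1_2$, $\varepsilon_s(h)=1_1\varepsilon(h1_2)$. A partial representation of $H$ in $A$ is a linear $\pi\colon H\to A$ with, for all $h,k$: (PR1) $\pi(1_H)=1_A$; (PR2) $\pi(h)\pi(k_1)\pi(S(k_2))=\pi(hk_1)\pi(S(k_2))$; (PR3) $\pi(h)\pi(S(k_1))\pi(k_2)=\pi(hS(k_1))\pi(k_2)$;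 (PR4) $\pi(h_1)\pi(S(h_2))\pi(k)=\pi(h_1)\pi(S(h_2)k)$; (PR5) $\pi(S(h_1))\pi(h_2)\pi(k)=\pi(S(h_1))\pi(h_2k)$; (PR6) $\pi(h)=\pi(h_1)\pi(S(h_2))\pi(h_3)$. *)

(* Defs.v *)
From HB Require Import structures.
From mathcomp Require Import all_boot all_order all_algebra.
Set Implicit Arguments. Unset Strict Implicit. Unset Printing Implicit Defensive.
Import GRing.Theory.
Local Open Scope ring_scope.

(* Tensors in H (x) H and H (x) H (x) H are represented by finite formal sums,
   i.e. lists of pairs / triples of elements.  Two such formal sums denote the
   same element of the tensor product (over a field) iff all pairs (resp.
   triples) of linear functionals agree on them. *)

Section WeakHopf.
Variable k : fieldType.

Definition lin_functional (V : lmodType k) (f : V -> k) : Prop :=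
  forall (a : k) (x y : V), f (a *: x + y) = a * f x + f y.

Definition lin_map (V W : lmodType k) (f : V -> W) : Prop :=
  forall (a : k) (x y : V), f (a *: x + y) = a *: f x + f y.

Variable H : algType k.

Definition teq2 (s t : seq (H * H)) : Prop :=
  forall f g : H -> k, lin_functional f -> lin_functional g ->
    \sum_(p <- s) f p.1 * g p.2 = \sum_(p <- t) f p.1 * g p.2.

Definition teq3 (s t : seq (H * H * H)) : Prop :=
  forall f g l : H -> k,
    lin_functional f -> lin_functional g -> lin_functional l ->
    \sum_(p <- s) f p.1.1 * g p.1.2 * l p.2 =
    \sum_(p <- t) f p.1.1 * g p.1.2 * l p.2.

Definition tmul2 (s t : seq (H * H)) : seq (H * H) :=
  [seq (p.1 * q.1, p.2 * q.2) | p <- s, q <- t].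
Definition tmul3 (s t : seq (H * H * H)) : seq (H * H * H) :=
  [seq (p.1.1 * q.1.1, p.1.2 * q.1.2, p.2 * q.2) | p <- s, q <- t].

Variable cop : H -> seq (H * H).
Variable eps : H -> k.
Variable S : H -> H.

Definition cop2 (h : H) : seq (H * H * H) :=
  flatten [seq [seq (q.1, q.2, p.2) | q <- cop p.1] | p <- cop h].
Definition cop2' (h : H) : seq (H * H * H) :=
  flatten [seq [seq (p.1, q.1, q.2) | q <- cop p.2] | p <- cop h].

Definition eps_t (h : H) : H := \sum_(p <- cop 1) eps (p.1 * h) *: p.2.
Definition eps_s (h : H) : H := \sum_(p <- cop 1) eps (h * p.2) *: p.1.

Definition weak_hopf : Prop :=
  [/\
      forall (a : k) (x y : H),
        teq2 (cop (a *: x + y)) ([seq (a *: p.1, p.2) | p <- cop x] ++ cop y),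
      lin_functional eps,
      forall h, teq3 (cop2 h) (cop2' h),
      forall h, \sum_(p <- cop h) eps p.1 *: p.2 = h /\
                \sum_(p <- cop h) eps p.2 *: p.1 = h &
   [/\
      lin_map S,
      forall x y, teq2 (cop (x * y)) (tmul2 (cop x) (cop y)),
      forall x y z,
        (\sum_(p <- cop y) eps (x * p.1) * eps (p.2 * z) = eps (x * y * z)) /\
        (eps (x * y * z) = \sum_(p <- cop y) eps (x * p.2) * eps (p.1 * z)),
      teq3 (tmul3 [seq (1, q.1, q.2) | q <- cop 1] [seq (p.1, p.2, 1) | p <- cop 1])
           (cop2 1) /\
      teq3 (cop2 1)
           (tmul3 [seq (p.1, p.2, 1) | p <- cop 1] [seq (1, q.1, q.2) | q <- cop 1]) &
      [/\ forall h, \sum_(p <- cop h) p.1 * S p.2 = eps_t h,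
          forall h, \sum_(p <- cop h) S p.1 * p.2 = eps_s h &
          forall h, S h = \sum_(p <- cop2 h) S p.1.1 * p.1.2 * S p.2]]].

Variable A : algType k.
Variable pi : H -> A.

Definition partial_rep : Prop :=
  [/\ lin_map pi,
      pi 1 = 1,
      forall h x, \sum_(p <- cop x) pi h * pi p.1 * pi (S p.2)
                          = \sum_(p <- cop x) pi (h * p.1) * pi (S p.2),
      forall h x, \sum_(p <- cop x) pi h * pi (S p.1) * pi p.2
                          = \sum_(p <- cop x) pi (h * S p.1) * pi p.2 &
   [/\ forall h x, \sum_(p <- cop h) pi p.1 * pi (S p.2) * pi x
                           = \sum_(p <- cop h) pi p.1 * pi (S p.2 * x),
       forall h x, \sum_(p <- cop h) pi (S p.1) * pi p.2 * pi x
                           = \sum_(p <- cop h) pi (S p.1) * pi (p.2 * x) &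
       forall h, pi h = \sum_(p <- cop2 h) pi p.1.1 * pi (S p.1.2) * pi p.2]].

End WeakHopf.

(* Main.v *)
Require Import Defs.
From HB Require Import structures.
From mathcomp Require Import all_boot all_order all_algebra.
Import GRing.Theory.
Local Open Scope ring_scope.

Module Aux.
From mathcomp Require Import boolp classical_sets.
Set Implicit Arguments. Unset Strict Implicit. Unset Printing Implicit Defensive.

Section Ext.
Variable k : fieldType.
Variable V : lmodType k.

Definition clos (M : V -> Prop) := forall (c : k) x y, M x -> M y -> M (c *: x + y).

Lemma ext_fun (W : V -> Prop) (a : V) :
  W 0 -> clos W -> ~ W a ->
  exists phi : V -> k, (forall c x y, phi (c *: x + y) = c * phi x + phi y)
     /\ phi a = 1 /\ forall w, W w -> phi w = 0.
Proof.
move=> W0 Wc Wa.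
pose P := fun M : set V => ~ (M a \/ W a) /\ clos (fun x => M x \/ W x).
have [A [[PA1 PA2] Amax]] : exists A : set V, P A /\ (forall B : set V, (A `<` B)%classic -> ~ P B).
  apply: Zorn_bigcup => F FP Ftot; split.
    case=> [[X FX Xa]|//]; by case: (FP X FX) => /(_ (or_introl Xa)).
  move=> c x y [[X FX Xx]|Wx] [[Y FY Yy]|Wy].
  - have [XY|YX] := Ftot X Y FX FY.
    + have := (FP Y FY).2 c x y (or_introl (XY _ Xx)) (or_introl Yy).
      by case=> [?|?]; [left; exists Y|right].
    + have := (FP X FX).2 c x y (or_introl Xx) (or_introl (YX _ Yy)).
      by case=> [?|?]; [left; exists X|right].
  - have := (FP X FX).2 c x y (or_introl Xx) (or_intror Wy).
    by case=> [?|?]; [left; exists X|right].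
  - have := (FP Y FY).2 c x y (or_intror Wx) (or_introl Yy).
    by case=> [?|?]; [left; exists Y|right].
  - by right; apply: Wc.
pose W' := fun x => A x \/ W x.
have W'0 : W' 0 by right.
have W'Z c x : W' x -> W' (c *: x) by move=> Wx; rewrite -[c *: x]addr0; apply: PA2.
have W'D x y : W' x -> W' y -> W' (x + y) by move=> ? ?; rewrite -[x]scale1r; apply: PA2.
have W'a : ~ W' a by [].
have key v : exists c : k, W' (v - c *: a).
  apply: contrapT => nv.
  pose B := fun z => exists w c, W' w /\ z = w + c *: v.
  apply: (Amax B); first split.
  - by move=> z Az; exists z, 0; rewrite scale0r addr0; split=> //; left.
  - move=> BA; apply: nv; exists 0; rewrite scale0r subr0.
    have : B v by exists 0, 1; rewrite scale1r add0r.
    by move/BA; left.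
  have WB w : W w -> B w by move=> Ww; exists w, 0; rewrite scale0r addr0; split=> //; right.
  split.
  - have Ba : ~ B a.
      case=> w [c [Ww' ea]].
      have [c0|cn0] := eqVneq c 0.
        by move: ea; rewrite c0 scale0r addr0 => ea; apply: W'a; rewrite ea.
      apply: nv; exists c^-1.
      have -> : v - c^-1 *: a = (- c^-1) *: w.
        by rewrite ea scalerDr scalerA mulVf // scale1r scaleNr opprD addrCA subrr addr0.
      exact: W'Z.
    by case=> // /WB.
  - move=> c x y Bx By; left.
    have [w1 [c1 [W1 ->]]] : B x by case: Bx => // /WB.
    have [w2 [c2 [W2 ->]]] : B y by case: By => // /WB.
    exists (c *: w1 + w2), (c * c1 + c2); split; first exact: PA2.
    by rewrite scalerDr scalerDl scalerA !addrA; congr (_ + _); rewrite -!addrA; congr (_ + _); rewrite addrC.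
have [phi Hphi] := choice key.
have uniq v c : W' (v - c *: a) -> c = phi v.
  move=> Hc; apply: contrapT => ne.
  have : W' ((c - phi v) *: a).
    have -> : (c - phi v) *: a = (v - phi v *: a) - (v - c *: a).
      by rewrite scalerBl opprD opprK addrACA subrr add0r addrC.
    apply: W'D; first exact: Hphi.
    by rewrite -scaleN1r; apply: W'Z.
  move/(W'Z (c - phi v)^-1); rewrite scalerA mulVf ?scale1r //.
  by rewrite subr_eq0; apply/eqP.
exists phi; split; [|split].
- move=> c x y; symmetry; apply: uniq.
  have -> : c *: x + y - (c * phi x + phi y) *: a = c *: (x - phi x *: a) + (y - phi y *: a).
    by rewrite scalerDl scalerBr scalerA opprD !addrA; congr (_ + _); rewrite -!addrA; congr (_ + _); rewrite addrC.
  by apply: PA2; apply: Hphi.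
- by symmetry; apply: uniq; rewrite scale1r subrr.
- by move=> w Ww; symmetry; apply: uniq; rewrite scale0r subr0; right.
Qed.
End Ext.

End Aux.

Module Aux2.
Import Aux.
Set Implicit Arguments. Unset Strict Implicit. Unset Printing Implicit Defensive.

Section LinFacts.
Variable k : fieldType.

Section LM.
Variables (U V : lmodType k) (g : U -> V).
Hypothesis lg : lin_map g.
Lemma lm0 : g 0 = 0.
Proof. have := lg 1 0 0; rewrite scale1r addr0 scale1r => /eqP; rewrite -subr_eq0 opprD addrA subrr add0r oppr_eq0; by move/eqP. Qed.
Lemma lmD x y : g (x + y) = g x + g y.
Proof. by rewrite -{1}[x]scale1r lg scale1r. Qed.
Lemma lmZ c x : g (c *: x) = c *: g x.
Proof. by rewrite -[c *: x]addr0 lg lm0 addr0. Qed.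
Lemma lmN x : g (- x) = - g x.
Proof. by rewrite -scaleN1r lmZ scaleN1r. Qed.
Lemma lmB x y : g (x - y) = g x - g y.
Proof. by rewrite lmD lmN. Qed.
Lemma lm_sum I (r : seq I) (F : I -> U) : g (\sum_(i <- r) F i) = \sum_(i <- r) g (F i).
Proof. elim: r => [|i r IH]; by rewrite ?big_nil ?lm0 // !big_cons lmD IH. Qed.
End LM.

Section LF.
Variables (U : lmodType k) (g : U -> k).
Hypothesis lg : lin_functional g.
Lemma lf0 : g 0 = 0.
Proof. have := lg 1 0 0; rewrite scale1r addr0 mul1r => /eqP; rewrite -subr_eq0 opprD addrA subrr add0r oppr_eq0; by move/eqP. Qed.
Lemma lfD x y : g (x + y) = g x + g y.
Proof. by rewrite -{1}[x]scale1r lg mul1r. Qed.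
Lemma lfZ c x : g (c *: x) = c * g x.
Proof. by rewrite -[c *: x]addr0 lg lf0 addr0. Qed.
Lemma lfN x : g (- x) = - g x.
Proof. by rewrite -scaleN1r lfZ mulN1r. Qed.
Lemma lfB x y : g (x - y) = g x - g y.
Proof. by rewrite lfD lfN. Qed.
Lemma lf_sum I (r : seq I) (F : I -> U) : g (\sum_(i <- r) F i) = \sum_(i <- r) g (F i).
Proof. elim: r => [|i r IH]; by rewrite ?big_nil ?lf0 // !big_cons lfD IH. Qed.
End LF.

Section FDB.
Variable U : lmodType k.

Lemma fdb (L : seq U) : exists m (e : nat -> U) (f : nat -> U -> k),
  [/\ forall j, lin_functional (f j),
      forall j l, (j < m)%N -> (l < m)%N -> f j (e l) = (j == l)%:R &
      forall x, x \in L -> x = \sum_(j < m) f j x *: e j].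
Proof.
elim: L => [|x L [m [e [f [lf dual rep]]]]].
  exists 0%N, (fun _ => 0), (fun _ _ => 0); split=> // j a x y; by rewrite mulr0 addr0.
pose P y := \sum_(j < m) f j y *: e j.
have fP j y : (j < m)%N -> f j (P y) = f j y.
  move=> jm; rewrite /P (lf_sum (lf j)).
  rewrite (bigD1 (Ordinal jm)) //= big1 ?addr0 => [|i ij].
    by rewrite (lfZ (lf j)) dual // eqxx mulr1.
  rewrite (lfZ (lf j)) dual //.
  suff -> : (j == i) = false by rewrite mulr0.
  by apply/eqP => ji; case/eqP: ij; apply: val_inj; rewrite /= ji.
have PP y : P (P y) = P y by apply: eq_bigr => j _; rewrite fP.
have Plin : lin_map P.
  move=> c y z; rewrite /P scaler_sumr -big_split /=; apply: eq_bigr => j _.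
  by rewrite (lf j) scalerDl scalerA.
have Pe l : (l < m)%N -> P (e l) = e l.
  move=> lm; rewrite /P (bigD1 (Ordinal lm)) //= dual // eqxx scale1r big1 ?addr0 // => i il.
  rewrite dual //.
  suff -> : (i == l :> nat) = false by rewrite scale0r.
  by apply/eqP => ji; case/eqP: il; apply: val_inj; rewrite /= ji.
have [xP|xnP] := eqVneq x (P x).
  exists m, e, f; split=> // y; rewrite inE => /orP[/eqP->|]; [exact: xP| exact: rep].
pose x' := x - P x.
have W0 : P 0 = 0 by rewrite (lm0 Plin).
have Wc : clos (fun y => P y = y).
  by move=> c y z Py Pz; rewrite Plin Py Pz.
have Wx : ~ (P x' = x').
  rewrite /x' (lmB Plin) PP subrr => /eqP; rewrite eq_sym subr_eq0.
  by apply/negP.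
have [phi [lphi [phi1 phi0]]] := ext_fun W0 Wc Wx.
exists m.+1, (fun j => if j == m then x' else e j), (fun j => if j == m then phi else f j).
split.
- by move=> j; case: eqP => _ //; exact: lphi.
- move=> j l jm lm.
  have [ej|jnm] := eqVneq j m; have [el|lnm] := eqVneq l m.
  + by rewrite ej el eqxx phi1.
  + have lm' : (l < m)%N by rewrite ltn_neqAle lnm -ltnS.
    by rewrite ej eq_sym (negbTE lnm) phi0 ?Pe.
  + have jm' : (j < m)%N by rewrite ltn_neqAle jnm -ltnS.
    by rewrite el (negbTE jnm) /x' (lfB (lf j)) fP // subrr.
  + have lm' : (l < m)%N by rewrite ltn_neqAle lnm -ltnS.
    have jm' : (j < m)%N by rewrite ltn_neqAle jnm -ltnS.
    by rewrite dual.
- have phiP y : phi (P y) = 0 by apply: phi0; rewrite PP.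
  move=> y; rewrite big_ord_recr /= eqxx.
  have -> : \sum_(i < m) (if (i : nat) == m then phi else f i) y *: (if (i : nat) == m then x' else e i)
       = P y by apply: eq_bigr => i _; rewrite (ltn_eqF (ltn_ord i)).
  rewrite inE => /orP[/eqP->|yL].
    have -> : phi x = 1.
      have l1 := lphi 1 x' (P x); rewrite scale1r in l1.
      by rewrite -[x](subrK (P x)) -/x' l1 phi1 phiP mul1r addr0.
    by rewrite scale1r /x' addrC subrK.
  have Py : P y = y by rewrite {2}(rep y yL).
  by rewrite (phi0 _ Py) scale0r addr0 Py.
Qed.
End FDB.

Section Transfer.
Variable H : algType k.

Lemma T2 (V : lmodType k) (s t : seq (H * H)) : teq2 s t ->
  forall B : H -> H -> V, (forall b, lin_map (fun a => B a b)) -> (forall a, lin_map (B a)) ->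
  \sum_(p <- s) B p.1 p.2 = \sum_(p <- t) B p.1 p.2.
Proof.
move=> st B l1 l2.
have [m [e [f [lf _ rep]]]] := fdb ([seq p.1 | p <- s] ++ [seq p.2 | p <- s] ++ [seq p.1 | p <- t] ++ [seq p.2 | p <- t]).
have ex x y : x = \sum_(j < m) f j x *: e j -> y = \sum_(j < m) f j y *: e j ->
   B x y = \sum_(j < m) \sum_(l < m) (f j x * f l y) *: B (e j) (e l).
  move=> ex ey; rewrite {1}ex (lm_sum (l1 y)); apply: eq_bigr => j _.
  rewrite (lmZ (l1 y)) {1}ey (lm_sum (l2 _)) scaler_sumr; apply: eq_bigr => l _.
  by rewrite (lmZ (l2 _)) scalerA.
have E (r : seq (H * H)) : {subset [seq p.1 | p <- r] ++ [seq p.2 | p <- r] <= [seq p.1 | p <- s] ++ [seq p.2 | p <- s] ++ [seq p.1 | p <- t] ++ [seq p.2 | p <- t]} ->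
   \sum_(p <- r) B p.1 p.2 = \sum_(j < m) \sum_(l < m) (\sum_(p <- r) f j p.1 * f l p.2) *: B (e j) (e l).
  move=> sub; rewrite (eq_big_seq (fun p => \sum_(j < m) \sum_(l < m) (f j p.1 * f l p.2) *: B (e j) (e l))).
    rewrite exchange_big; apply: eq_bigr => j _; rewrite exchange_big; apply: eq_bigr => l _.
    by rewrite scaler_suml.
  move=> p pr; apply: ex; apply: rep; apply: sub; rewrite mem_cat.
    by apply/orP; left; apply/mapP; exists p.
  by apply/orP; right; apply/mapP; exists p.
rewrite !E; first by apply: eq_bigr => j _; apply: eq_bigr => l _; rewrite st.
- move=> x; rewrite !mem_cat => /orP[]->; by rewrite ?orbT.
- move=> x; rewrite !mem_cat => /orP[]->; by rewrite ?orbT.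
Qed.

Lemma T3 (V : lmodType k) (s t : seq (H * H * H)) : teq3 s t ->
  forall T : H -> H -> H -> V, (forall b c, lin_map (fun a => T a b c)) ->
    (forall a c, lin_map (fun b => T a b c)) -> (forall a b, lin_map (T a b)) ->
  \sum_(p <- s) T p.1.1 p.1.2 p.2 = \sum_(p <- t) T p.1.1 p.1.2 p.2.
Proof.
move=> st T l1 l2 l3.
pose cs (r : seq (H * H * H)) := [seq p.1.1 | p <- r] ++ [seq p.1.2 | p <- r] ++ [seq p.2 | p <- r].
have [m [e [f [lf _ rep]]]] := fdb (cs s ++ cs t).
have ex x y z : x = \sum_(j < m) f j x *: e j -> y = \sum_(j < m) f j y *: e j ->
   z = \sum_(j < m) f j z *: e j ->
   T x y z = \sum_(i < m) \sum_(j < m) \sum_(l < m) (f i x * f j y * f l z) *: T (e i) (e j) (e l).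
  move=> ex ey ez; rewrite {1}ex (lm_sum (l1 y z)); apply: eq_bigr => i _.
  rewrite (lmZ (l1 _ _)) {1}ey (lm_sum (l2 _ _)) scaler_sumr; apply: eq_bigr => j _.
  rewrite (lmZ (l2 _ _)) {1}ez (lm_sum (l3 _ _)) !scaler_sumr; apply: eq_bigr => l _.
  by rewrite (lmZ (l3 _ _)) !scalerA.
have E (r : seq (H * H * H)) : {subset cs r <= cs s ++ cs t} ->
   \sum_(p <- r) T p.1.1 p.1.2 p.2 = \sum_(i < m) \sum_(j < m) \sum_(l < m) (\sum_(p <- r) f i p.1.1 * f j p.1.2 * f l p.2) *: T (e i) (e j) (e l).
  move=> sub; rewrite (eq_big_seq (fun p => \sum_(i < m) \sum_(j < m) \sum_(l < m) (f i p.1.1 * f j p.1.2 * f l p.2) *: T (e i) (e j) (e l))).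
    rewrite exchange_big; apply: eq_bigr => i _; rewrite exchange_big; apply: eq_bigr => j _.
    rewrite exchange_big; apply: eq_bigr => l _.
    by rewrite scaler_suml.
  move=> p pr; apply: ex; apply: rep; apply: sub; rewrite /cs !mem_cat.
  - by apply/orP; left; apply/mapP; exists p.
  - by apply/orP; right; apply/orP; left; apply/mapP; exists p.
  - by apply/orP; right; apply/orP; right; apply/mapP; exists p.
rewrite !E; first by apply: eq_bigr => i _; apply: eq_bigr => j _; apply: eq_bigr => l _; rewrite st.
- by move=> x xt; rewrite mem_cat xt orbT.
- by move=> x xs; rewrite mem_cat xs.
Qed.
End Transfer.
End LinFacts.
Arguments T2 {k H V s t} st B l1 l2.
Arguments T3 {k H V s t} st T l1 l2 l3.

Section Comb.
Variable k : fieldType.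
Implicit Types U V W : lmodType k.

Lemma lin_sumf U V I (r : seq I) (F : I -> U -> V) :
  (forall i, lin_map (F i)) -> lin_map (fun x => \sum_(i <- r) F i x).
Proof.
move=> lF c x y; rewrite scaler_sumr -big_split; apply: eq_bigr => i _; exact: lF.
Qed.
Lemma lin_scalef U V (c : U -> k) (v : V) : lin_functional c -> lin_map (fun x => c x *: v).
Proof. by move=> lc a x y; rewrite lc scalerDl scalerA. Qed.
Lemma lin_scalec U V (c : k) (g : U -> V) : lin_map g -> lin_map (fun x => c *: g x).
Proof. by move=> lg a x y; rewrite lg scalerDr !scalerA mulrC. Qed.
Lemma lin_comp U V W (g : W -> V) (h : U -> W) : lin_map g -> lin_map h -> lin_map (fun x => g (h x)).
Proof. by move=> lg lh a x y; rewrite lh lg. Qed.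
Lemma lin_id U : lin_map (fun x : U => x).
Proof. by []. Qed.
Lemma lin_mull (R : algType k) (a : R) : lin_map (fun x : R => a * x).
Proof. by move=> c x y; rewrite mulrDr scalerAr. Qed.
Lemma lin_mulr (R : algType k) (a : R) : lin_map (fun x : R => x * a).
Proof. by move=> c x y; rewrite mulrDl scalerAl. Qed.
Lemma lin_mull' U (R : algType k) (a : R) (g : U -> R) : lin_map g -> lin_map (fun x => a * g x).
Proof. by move=> lg; apply: (lin_comp (lin_mull a)). Qed.
Lemma lin_mulr' U (R : algType k) (a : R) (g : U -> R) : lin_map g -> lin_map (fun x => g x * a).
Proof. by move=> lg; apply: (lin_comp (lin_mulr a)). Qed.
Lemma lf_comp U W (c : W -> k) (h : U -> W) : lin_functional c -> lin_map h -> lin_functional (fun x => c (h x)).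
Proof. by move=> lc lh a x y; rewrite lh lc. Qed.
Lemma lin_app1 U W X V (G : W -> X -> V) (c : X) (h : U -> W) :
  (forall b, lin_map (fun a => G a b)) -> lin_map h -> lin_map (fun x => G (h x) c).
Proof. by move=> lG lh a x y; rewrite lh lG. Qed.
End Comb.

Ltac ls n :=
  match n with
  | O => fail
  | S ?m =>
  first
   [ assumption
   | (match goal with h : forall _, lin_map _ |- _ => apply: h end)
   | (match goal with h : forall _ _, lin_map _ |- _ => apply: h end)
   | apply: lin_id
   | apply: lin_mull
   | apply: lin_mulr
   | (apply: lin_sumf => ? /=; ls m)
   | (apply: lin_scalef; ls m)
   | (apply: lin_scalec; ls m)
   | (apply: lin_mull'; ls m)
   | (apply: lin_mulr'; ls m)
   | (apply: lf_comp; [ls m | ls m])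
   | (apply: lin_comp; [ls m | ls m])
   | (apply: lin_app1; [ls m | ls m]) ]
  end.
Ltac linsolve := ls 8%nat.

Section Main.
Variables (k : fieldType) (H : algType k) (cop : H -> seq (H * H)) (eps : H -> k) (S : H -> H).
Hypothesis epsL : lin_functional eps.
Hypothesis coass : forall h, teq3 (cop2 cop h) (cop2' cop h).
Hypothesis counit : forall h, \sum_(p <- cop h) eps p.1 *: p.2 = h /\ \sum_(p <- cop h) eps p.2 *: p.1 = h.
Hypothesis copM : forall x y, teq2 (cop (x * y)) (tmul2 (cop x) (cop y)).
Hypothesis wcounit : forall x y z,
        (\sum_(p <- cop y) eps (x * p.1) * eps (p.2 * z) = eps (x * y * z)) /\
        (eps (x * y * z) = \sum_(p <- cop y) eps (x * p.2) * eps (p.1 * z)).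
Hypothesis wunit2 : teq3 (cop2 cop 1)
           (tmul3 [seq (p.1, p.2, 1) | p <- cop 1] [seq (1, q.1, q.2) | q <- cop 1]).

Lemma big_tmul2 (V : lmodType k) (F : H * H -> V) s t :
  \sum_(p <- tmul2 s t) F p = \sum_(p <- s) \sum_(q <- t) F (p.1 * q.1, p.2 * q.2).
Proof. by rewrite /tmul2 big_allpairs_dep. Qed.
Lemma big_tmul3 (V : lmodType k) (F : H * H * H -> V) s t :
  \sum_(p <- tmul3 s t) F p = \sum_(p <- s) \sum_(q <- t) F (p.1.1 * q.1.1, p.1.2 * q.1.2, p.2 * q.2).
Proof. by rewrite /tmul3 big_allpairs_dep. Qed.
Lemma big_cop2 (V : lmodType k) (F : H * H * H -> V) h :
  \sum_(p <- cop2 cop h) F p = \sum_(p <- cop h) \sum_(q <- cop p.1) F (q.1, q.2, p.2).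
Proof. by rewrite /cop2 big_flatten big_map; apply: eq_bigr => p _; rewrite big_map. Qed.
Lemma big_cop2' (V : lmodType k) (F : H * H * H -> V) h :
  \sum_(p <- cop2' cop h) F p = \sum_(p <- cop h) \sum_(q <- cop p.2) F (p.1, q.1, q.2).
Proof. by rewrite /cop2' big_flatten big_map; apply: eq_bigr => p _; rewrite big_map. Qed.

Lemma J4 (V : lmodType k) (T : H -> H -> V) :
  (forall b, lin_map (fun a => T a b)) -> (forall a, lin_map (T a)) -> forall y,
  \sum_(r <- cop 1) \sum_(q <- cop y) eps (r.2 * q.1) *: T r.1 q.2 = \sum_(r <- cop 1) T r.1 (r.2 * y).
Proof.
move=> l1 l2 y.
have S1 : forall r : H * H, \sum_(q <- cop y) eps (r.2 * q.1) *: T r.1 q.2 =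
   \sum_(r' <- cop 1) \sum_(q <- cop y) eps (r.2 * r'.1 * q.1) *: T r.1 (r'.2 * q.2).
  move=> r; rewrite -{1}[y]mul1r.
  rewrite (T2 (copM 1 y) (fun a b => eps (r.2 * a) *: T r.1 b)); last 2 first.
  - by move=> b; linsolve.
  - by move=> a; linsolve.
  by rewrite big_tmul2; apply: eq_bigr => r' _; apply: eq_bigr => q _; rewrite mulrA.
rewrite (eq_bigr _ (fun r _ => S1 r)).
pose G a b c := \sum_(q <- cop y) eps (b * q.1) *: T a (c * q.2).
have S2 : \sum_(r <- cop 1) \sum_(r' <- cop 1) \sum_(q <- cop y) eps (r.2 * r'.1 * q.1) *: T r.1 (r'.2 * q.2)
  = \sum_(p <- tmul3 [seq (p.1, p.2, 1) | p <- cop 1] [seq (1, q.1, q.2) | q <- cop 1]) G p.1.1 p.1.2 p.2.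
  rewrite big_tmul3 big_map; apply: eq_bigr => r _; rewrite big_map; apply: eq_bigr => r' _.
  by rewrite /G /= mulr1 mul1r.
rewrite S2 -(T3 wunit2 G); first last.
- by move=> a b; rewrite /G; linsolve.
- by move=> a c; rewrite /G; linsolve.
- by move=> b c; rewrite /G; linsolve.
rewrite (T3 (coass 1) G); first last.
- by move=> a b; rewrite /G; linsolve.
- by move=> a c; rewrite /G; linsolve.
- by move=> b c; rewrite /G; linsolve.
rewrite big_cop2'; apply: eq_bigr => u _.
rewrite /G /=.
have := T2 (copM u.2 y) (fun a b => eps a *: T u.1 b).
rewrite big_tmul2 /= => <-; first last.
- by move=> a; linsolve.
- by move=> b; linsolve.
rewrite -{2}[u.2 * y](proj1 (counit (u.2 * y))) (lm_sum (l2 u.1)); apply: eq_bigr => z _.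
by rewrite (lmZ (l2 u.1)).
Qed.

Lemma J4m (V : lmodType k) (G : H -> H -> V) :
  (forall b, lin_map (fun a => G a b)) -> (forall a, lin_map (G a)) -> forall y,
  \sum_(p <- cop y) \sum_(r <- cop 1) eps (p.2 * r.1) *: G p.1 r.2 = \sum_(r <- cop 1) G (y * r.1) r.2.
Proof.
move=> l1 l2 y.
rewrite -{1}[y]mulr1 (T2 (copM y 1) (fun a b => \sum_(r <- cop 1) eps (b * r.1) *: G a r.2)); first last.
- by move=> a; linsolve.
- by move=> b; linsolve.
rewrite big_tmul2 /=.
have S2 : forall p : H * H, \sum_(r' <- cop 1) \sum_(r <- cop 1) eps (p.2 * r'.2 * r.1) *: G (p.1 * r'.1) r.2
   = \sum_(u <- cop 1) \sum_(w <- cop u.1) eps (p.2 * w.2) *: G (p.1 * w.1) u.2.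
  move=> p.
  pose K a b c := eps (p.2 * b) *: G (p.1 * a) c.
  have := T3 wunit2 K; rewrite big_cop2 big_tmul3 big_map /= => ->; first last.
  - by move=> a b; rewrite /K; linsolve.
  - by move=> a c; rewrite /K; linsolve.
  - by move=> b c; rewrite /K; linsolve.
  apply: eq_bigr => r' _; rewrite big_map; apply: eq_bigr => r _.
  by rewrite /K /= mulr1 mul1r mulrA.
rewrite (eq_bigr _ (fun p _ => S2 p)) exchange_big /=; apply: eq_bigr => u _.
have := T2 (copM y u.1) (fun a b => eps b *: G a u.2).
rewrite big_tmul2 /= => <-; first last.
- by move=> a; linsolve.
- by move=> b; linsolve.
rewrite -{2}[y * u.1](proj2 (counit (y * u.1))) (lm_sum (l1 u.2)); apply: eq_bigr => z _.
by rewrite (lmZ (l1 u.2)).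
Qed.

Lemma epstL : lin_map (eps_t cop eps).
Proof. by rewrite /eps_t; linsolve. Qed.
Lemma epssL : lin_map (eps_s cop eps).
Proof. by rewrite /eps_s; linsolve. Qed.

Lemma I3 (V : lmodType k) (B : H -> H -> V) :
  (forall b, lin_map (fun a => B a b)) -> (forall a, lin_map (B a)) -> forall x y,
  \sum_(p <- cop (x * y)) B (eps_t cop eps p.1) p.2 = \sum_(p <- cop x) B (eps_t cop eps p.1) (p.2 * y).
Proof.
move=> l1 l2 x y.
have eL := epstL.
have E : \sum_(p <- cop x) B (eps_t cop eps p.1) (p.2 * y) =
   \sum_(p <- cop x) \sum_(r' <- cop 1) \sum_(r <- cop 1) eps (r.1 * p.1 * r'.1) *: B r.2 (p.2 * (r'.2 * y)).
  rewrite -{1}[x]mulr1 (T2 (copM x 1) (fun a b => B (eps_t cop eps a) (b * y))); first last.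
  - by move=> a; linsolve.
  - by move=> b; linsolve.
  rewrite big_tmul2; apply: eq_bigr => p _; apply: eq_bigr => r' _.
  rewrite /eps_t (lm_sum (l1 _)); apply: eq_bigr => r _.
  by rewrite (lmZ (l1 _)) /= !mulrA.
rewrite E (T2 (copM x y) (fun a b => B (eps_t cop eps a) b)); first last.
- by move=> a; linsolve.
- by move=> b; linsolve.
rewrite big_tmul2; apply: eq_bigr => p _ /=.
have := J4 (T := fun c d => \sum_(r <- cop 1) eps (r.1 * p.1 * c) *: B r.2 (p.2 * d)) _ _ y.
move=> <-; first last.
- by move=> a; linsolve.
- by move=> b; linsolve.
transitivity (\sum_(q <- cop y) \sum_(r <- cop 1) \sum_(r' <- cop 1)
    (eps (r'.2 * q.1) * eps (r.1 * p.1 * r'.1)) *: B r.2 (p.2 * q.2)).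
  apply: eq_bigr => q _.
  rewrite /eps_t (lm_sum (l1 _)); apply: eq_bigr => r _.
  rewrite (lmZ (l1 _)) -scaler_suml; congr (_ *: _).
  have h := proj1 (wcounit (r.1 * p.1) 1 q.1); rewrite mulr1 in h.
  rewrite mulrA -h; by apply: eq_bigr => r' _; rewrite mulrC.
rewrite (eq_bigr (fun q => \sum_(r' <- cop 1) \sum_(r <- cop 1)
    (eps (r'.2 * q.1) * eps (r.1 * p.1 * r'.1)) *: B r.2 (p.2 * q.2))); last first.
  by move=> q _; rewrite exchange_big.
rewrite exchange_big; apply: eq_bigr => r' _; apply: eq_bigr => q _.
by rewrite scaler_sumr; apply: eq_bigr => r _; rewrite scalerA.
Qed.

Lemma I3m (V : lmodType k) (B : H -> H -> V) :
  (forall b, lin_map (fun a => B a b)) -> (forall a, lin_map (B a)) -> forall y x,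
  \sum_(p <- cop (y * x)) B p.1 (eps_s cop eps p.2) = \sum_(p <- cop x) B (y * p.1) (eps_s cop eps p.2).
Proof.
move=> l1 l2 y x.
have eL := epssL.
pose G u c := \sum_(q <- cop x) \sum_(r <- cop 1) eps (c * (q.2 * r.2)) *: B (u * q.1) r.1.
have Gl1 : forall b, lin_map (fun a => G a b) by move=> b; rewrite /G; linsolve.
have Gl2 : forall a, lin_map (G a) by move=> a; rewrite /G; linsolve.
rewrite (T2 (copM y x) (fun a b => B a (eps_s cop eps b))); first last.
- by move=> a; linsolve.
- by move=> b; linsolve.
rewrite big_tmul2 /=.
transitivity (\sum_(p <- cop y) \sum_(r' <- cop 1) eps (p.2 * r'.1) *: G p.1 r'.2).
  apply: eq_bigr => p _.
  symmetry; rewrite (eq_bigr (fun r' => \sum_(q <- cop x) \sum_(r <- cop 1)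
       (eps (p.2 * r'.1) * eps (r'.2 * (q.2 * r.2))) *: B (p.1 * q.1) r.1)); last first.
    move=> r' _; rewrite /G scaler_sumr; apply: eq_bigr => q _.
    by rewrite scaler_sumr; apply: eq_bigr => r _; rewrite scalerA.
  rewrite exchange_big; apply: eq_bigr => q _; rewrite exchange_big /=.
  rewrite /eps_s (lm_sum (l2 _)); apply: eq_bigr => r _.
  rewrite -scaler_suml (lmZ (l2 _)); congr (_ *: _).
  have h := proj1 (wcounit p.2 1 (q.2 * r.2)); rewrite mulr1 in h.
  by rewrite h mulrA.
rewrite (J4m Gl1 Gl2 y).
rewrite -{1}[x]mul1r (T2 (copM 1 x) (fun a b => B (y * a) (eps_s cop eps b))); first last.
- by move=> a; linsolve.
- by move=> b; linsolve.
rewrite big_tmul2; apply: eq_bigr => r' _; apply: eq_bigr => q _ /=.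
rewrite /eps_s (lm_sum (l2 _)); apply: eq_bigr => r _.
by rewrite (lmZ (l2 _)) !mulrA.
Qed.
End Main.

Section PR.
Variables (k : fieldType) (H : algType k) (cop : H -> seq (H * H)) (eps : H -> k) (S : H -> H).
Variables (A : algType k) (pi : H -> A).
Hypothesis epsL : lin_functional eps.
Hypothesis coass : forall h, teq3 (cop2 cop h) (cop2' cop h).
Hypothesis counit : forall h, \sum_(p <- cop h) eps p.1 *: p.2 = h /\ \sum_(p <- cop h) eps p.2 *: p.1 = h.
Hypothesis copM : forall x y, teq2 (cop (x * y)) (tmul2 (cop x) (cop y)).
Hypothesis wcounit : forall x y z,
        (\sum_(p <- cop y) eps (x * p.1) * eps (p.2 * z) = eps (x * y * z)) /\
        (eps (x * y * z) = \sum_(p <- cop y) eps (x * p.2) * eps (p.1 * z)).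
Hypothesis wunit2 : teq3 (cop2 cop 1)
           (tmul3 [seq (p.1, p.2, 1) | p <- cop 1] [seq (1, q.1, q.2) | q <- cop 1]).
Hypothesis SL : lin_map S.
Hypothesis piL : lin_map pi.
Hypothesis PR2 : forall h x, \sum_(p <- cop x) pi h * pi p.1 * pi (S p.2)
                          = \sum_(p <- cop x) pi (h * p.1) * pi (S p.2).
Hypothesis PR5 : forall h x, \sum_(p <- cop h) pi (S p.1) * pi p.2 * pi x
                           = \sum_(p <- cop h) pi (S p.1) * pi (p.2 * x).
Hypothesis PR6 : forall h, pi h = \sum_(p <- cop2 cop h) pi p.1.1 * pi (S p.1.2) * pi p.2.

Lemma one_three :
  (forall h, \sum_(p <- cop h) pi p.1 * pi (S p.2) = pi (eps_t cop eps h)) ->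
  forall x y, pi (x * y) = pi x * pi y.
Proof.
move=> P1.
have F1 h : pi h = \sum_(p <- cop h) pi (eps_t cop eps p.1) * pi p.2.
  rewrite {1}(PR6 h) big_cop2; apply: eq_bigr => p _.
  by rewrite -P1 mulr_suml.
have StepA x y : pi x * pi y = \sum_(p <- cop x) pi (eps_t cop eps p.1) * pi (p.2 * y).
  rewrite {1}(PR6 x) mulr_suml.
  rewrite (T3 (coass x) (fun a b c => pi a * pi (S b) * pi c * pi y)); first last.
  - by move=> a b; linsolve.
  - by move=> a c; linsolve.
  - by move=> b c; linsolve.
  rewrite big_cop2'.
  transitivity (\sum_(p <- cop x) \sum_(q <- cop p.2) pi p.1 * pi (S q.1) * pi (q.2 * y)).
    apply: eq_bigr => p _.
    transitivity (pi p.1 * \sum_(q <- cop p.2) pi (S q.1) * pi q.2 * pi y).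
      by rewrite mulr_sumr; apply: eq_bigr => q _; rewrite !mulrA.
    by rewrite PR5 mulr_sumr; apply: eq_bigr => q _; rewrite !mulrA.
  have := T3 (coass x) (fun a b c => pi a * pi (S b) * pi (c * y)).
  rewrite big_cop2 big_cop2' /= => <-; first last.
  - by move=> a b; linsolve.
  - by move=> a c; linsolve.
  - by move=> b c; linsolve.
  by apply: eq_bigr => p _; rewrite -P1 mulr_suml.
move=> x y.
rewrite F1 (I3 epsL coass counit copM wcounit wunit2 (B := fun a b => pi a * pi b)); first last.
- by move=> a; linsolve.
- by move=> b; linsolve.
by rewrite StepA.
Qed.

Lemma two_three :
  (forall h, \sum_(p <- cop h) pi (S p.1) * pi p.2 = pi (eps_s cop eps h)) ->
  forall x y, pi (y * x) = pi y * pi x.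
Proof.
move=> P2.
have F1 h : pi h = \sum_(p <- cop h) pi p.1 * pi (eps_s cop eps p.2).
  rewrite {1}(PR6 h) (T3 (coass h) (fun a b c => pi a * pi (S b) * pi c)); first last.
  - by move=> a b; linsolve.
  - by move=> a c; linsolve.
  - by move=> b c; linsolve.
  rewrite big_cop2'; apply: eq_bigr => p _.
  by rewrite -P2 mulr_sumr; apply: eq_bigr => q _; rewrite !mulrA.
have StepA y x : pi y * pi x = \sum_(p <- cop x) pi (y * p.1) * pi (eps_s cop eps p.2).
  rewrite {1}(PR6 x) mulr_sumr big_cop2.
  transitivity (\sum_(p <- cop x) \sum_(q <- cop p.1) pi (y * q.1) * pi (S q.2) * pi p.2).
    apply: eq_bigr => p _.
    transitivity ((\sum_(q <- cop p.1) pi y * pi q.1 * pi (S q.2)) * pi p.2).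
      by rewrite mulr_suml; apply: eq_bigr => q _; rewrite !mulrA.
    by rewrite PR2 mulr_suml.
  have := T3 (coass x) (fun a b c => pi (y * a) * pi (S b) * pi c).
  rewrite big_cop2 big_cop2' /= => ->; first last.
  - by move=> a b; linsolve.
  - by move=> a c; linsolve.
  - by move=> b c; linsolve.
  by apply: eq_bigr => p _; rewrite -P2 mulr_sumr; apply: eq_bigr => q _; rewrite !mulrA.
move=> x y.
rewrite F1 (I3m epsL counit copM wcounit wunit2 (B := fun a b => pi a * pi b)); first last.
- by move=> a; linsolve.
- by move=> b; linsolve.
by rewrite StepA.
Qed.
End PR.

End Aux2.
Import Aux Aux2.

Theorem proposition3p3 (k : fieldType) (H : algType k)
  (cop : H -> seq (H * H)) (eps : H -> k) (S : H -> H)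
  (A : algType k) (pi : H -> A) :
  weak_hopf cop eps S ->
  partial_rep cop S pi ->
  [<-> (forall h : H,
          \sum_(p <- cop h) pi p.1 * pi (S p.2) = pi (\sum_(p <- cop h) p.1 * S p.2)
          /\ pi (\sum_(p <- cop h) p.1 * S p.2) = pi (eps_t cop eps h));
       (forall h : H,
          \sum_(p <- cop h) pi (S p.1) * pi p.2 = pi (\sum_(p <- cop h) S p.1 * p.2)
          /\ pi (\sum_(p <- cop h) S p.1 * p.2) = pi (eps_s cop eps h));
       (pi 1 = 1 /\ forall x y : H, pi (x * y) = pi x * pi y)].
Proof.
case=> cL epsL coass counit [SL copM wcounit [wu1 wu2] [ant1 ant2 ant3]].
case=> piL pi1 PR2 PR3 [PR4 PR5 PR6].
have M2 : (forall x y : H, pi (x * y) = pi x * pi y) ->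
  (forall h : H,
          \sum_(p <- cop h) pi (S p.1) * pi p.2 = pi (\sum_(p <- cop h) S p.1 * p.2)
          /\ pi (\sum_(p <- cop h) S p.1 * p.2) = pi (eps_s cop eps h)).
  move=> M h; split; last by rewrite ant2.
  by rewrite (lm_sum piL); apply: eq_bigr => p _; rewrite M.
have M1 : (forall x y : H, pi (x * y) = pi x * pi y) ->
  (forall h : H,
          \sum_(p <- cop h) pi p.1 * pi (S p.2) = pi (\sum_(p <- cop h) p.1 * S p.2)
          /\ pi (\sum_(p <- cop h) p.1 * S p.2) = pi (eps_t cop eps h)).
  move=> M h; split; last by rewrite ant1.
  by rewrite (lm_sum piL); apply: eq_bigr => p _; rewrite M.
tfae.
- move=> H1; apply: M2.
  apply: (one_three epsL coass counit copM wcounit wu2 SL piL PR5 PR6).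
  by move=> h; rewrite (proj1 (H1 h)) (proj2 (H1 h)).
- move=> H2; split=> // x y.
  apply: (two_three epsL coass counit copM wcounit wu2 SL piL PR2 PR6).
  by move=> h; rewrite (proj1 (H2 h)) (proj2 (H2 h)).
- by case=> _ M; apply: M1.
Qed.
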